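(* Let $q$ be a prime power and $k\ge 8$. Let $\mathbf F_q=\{f_1=0,f_2,\dots,f_{q-1},f_q=1\}$, let $U_i=\langle\mathbf e_1+f_i\mathbf e_2,\mathbf e_3+f_i\mathbf e_4\rangle$ and $U_{q+i}=\langle\mathbf e_5+f_i\mathbf e_6,\mathbf e_7+f_i\mathbf e_8\rangle$ for $1\le i\le q$ (with $\mathbf e_j$ the standard basis of $\mathbf F_q^k$), let $U$ be the set of nonzero vectors of $\mathbf F_q^k$ outside $U_1\cup\dots\cup U_{2q}$, and let $\mathbf C_2$ be the linear $[n,k,d]_q$ code, $n=\frac{(q^k-1)-2q(q^2-1)}{q-1}$, $d=q^{k-1}-2q^2$, whose generator matrix has as columns exactly one representative of each class $\{\lambda\mathbf v:\lambda\in\mathbf F_q^*\}$, $\mathbf v\in U$; it is a locally recoverable code with locality $2$. If $q=2$, the CM defect of $\mathbf C_2$ is at most $2$; if $q\ge3$, the CM defect of $\mathbf C_2$ is at most $1$.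
   Context: $k^{(q)}_{\mathrm{opt}}(n,d)$ denotes the maximum dimension of a linear code over $\mathbf F_q$ of length $n$ and minimum distance $d$. For a locally recoverable linear $[n,k,d]_q$ code with locality $r$ (each coordinate's value is determined, on the code, by the values on some set of at most $r$ other coordinates), the Cadambe–Mazumdar bound states $k\le\min_{t\in\mathbb Z_{>0}}\{tr+k^{(q)}_{\mathrm{opt}}(n-t(r+1),d)\}$, and the CM defect is $\min_{t\in\mathbb Z_{>0}}\{tr+k^{(q)}_{\mathrm{opt}}(n-t(r+1),d)\}-k$; here $r=2$. *)

(* Defs.v *)
From HB Require Import structures.
From mathcomp Require Import all_boot all_order all_algebra all_field.
Set Implicit Arguments. Unset Strict Implicit. Unset Printing Implicit Defensive.
Import GRing.Theory.
Local Open Scope ring_scope.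

(* Codes are subspaces of 'rV[F]_n, represented (mxalgebra style) by the
   row space of a matrix. *)

Definition wt (F : fieldType) (n : nat) (v : 'rV[F]_n) : nat :=
  #|[set i : 'I_n | v 0 i != 0]|.

(* k_opt^{(q)}(n,d): maximal dimension of a linear code C <= F^n all of
   whose nonzero codewords have weight >= d (the zero code counts, dim 0). *)
Definition kopt (F : finFieldType) (n d : nat) : nat :=
  \max_(C : 'M[F]_n | [forall v : 'rV[F]_n,
          ((v <= C)%MS && (v != 0)) ==> (d <= wt v)%N]) \rank C.

(* Cadambe--Mazumdar bound  min_{t >= 1} { t r + k_opt(n - t(r+1), d) },
   t ranging over the t >= 1 with t(r+1) <= n (meaningful lengths). *)
Definition cm_term (F : finFieldType) (n d r t : nat) : nat :=
  (t * r + kopt F (n - t * r.+1) d)%N.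

Definition cm_bound (F : finFieldType) (n d r : nat) : nat :=
  \big[minn/cm_term F n d r 1]_(1 <= t < (n %/ r.+1).+1) cm_term F n d r t.

Definition cm_defect (F : finFieldType) (n k d r : nat) : nat :=
  (cm_bound F n d r - k)%N.

(* Minimum distance of the code generated by G (default n if the code is 0) *)
Definition code_mindist (F : finFieldType) (k n : nat) (G : 'M[F]_(k, n)) : nat :=
  \big[minn/n]_(m : 'rV[F]_k | m *m G != 0) wt (m *m G).

(* standard basis vector e_{j+1} (0-based index j) of F^k, as a column *)
Definition ebasis (F : fieldType) (k j : nat) : 'cV[F]_k :=
  \col_(i < k) (((i : nat) == j)%:R : F).

Definition in_U1 (F : fieldType) (k : nat) (f : F) (v : 'cV[F]_k) : Prop :=
  exists a b : F, v = a *: (ebasis F k 0 + f *: ebasis F k 1)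
                    + b *: (ebasis F k 2 + f *: ebasis F k 3).

Definition in_U2 (F : fieldType) (k : nat) (f : F) (v : 'cV[F]_k) : Prop :=
  exists a b : F, v = a *: (ebasis F k 4 + f *: ebasis F k 5)
                    + b *: (ebasis F k 6 + f *: ebasis F k 7).

Definition in_U (F : fieldType) (k : nat) (v : 'cV[F]_k) : Prop :=
  v != 0 /\ (forall f : F, ~ in_U1 f v) /\ (forall f : F, ~ in_U2 f v).

Definition C2_generator (F : fieldType) (k n : nat) (G : 'M[F]_(k, n)) : Prop :=
  (forall j : 'I_n, in_U (col j G)) /\
  (forall (j j' : 'I_n) (c : F), col j G = c *: col j' G -> j = j') /\
  (forall v : 'cV[F]_k, in_U v -> exists (j : 'I_n) (c : F), v = c *: col j G).

(* Main.v *)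
Require Import Defs.
From HB Require Import structures.
From mathcomp Require Import all_boot all_order all_algebra all_field.
From mathcomp Require Import zify ring.
Set Implicit Arguments. Unset Strict Implicit. Unset Printing Implicit Defensive.
Import GRing.Theory.
Local Open Scope ring_scope.


Lemma wt_sum (F : fieldType) N (v : 'rV[F]_N) : wt v = (\sum_i nat_of_bool (v 0%R i != 0%R))%N.
Proof. by rewrite /wt cardE -sum1_size big_enum big_mkcond /=; apply: eq_bigr => i _; rewrite inE; case: (v 0 i != 0). Qed.

Lemma coord_count (F : finFieldType) N (S : {set 'rV[F]_N}) (i : 'I_N) :
  (forall v w : 'rV[F]_N, v \in S -> w \in S -> forall c : F, v - c *: w \in S) ->
  (#|F| * #|[set v in S | v 0%R i != 0%R]| <= (#|F| - 1) * #|S|)%N.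
Proof.
move=> Scl.
set S1 := [set v in S | v 0 i != 0]; set S0 := [set v in S | v 0 i == 0].
have Hs : (#|S1| + #|S0| = #|S|)%N.
  rewrite -(cardsID [set v : 'rV[F]_N | v 0 i != 0] S) /S1 /S0; congr addn; apply: eq_card => v; rewrite !inE ?negbK andbC //.
case: (set_0Vmem S1) => [->|[w wS1]]; first by rewrite cards0 muln0.
have /setIdP [wS wi] := wS1.
pose f (v : 'rV[F]_N) := (v 0 i, v - (v 0 i / w 0 i) *: w).
have Hinj : {in S &, injective f}.
  move=> v1 v2 _ _ [e1 e2]; move: e2; rewrite e1 => /eqP.
  by rewrite (can_eq (subrK _)) => /eqP.
have sub : f @: S \subset setX [set: F] S0.
  apply/subsetP => _ /imsetP [v vS ->]; rewrite !inE /= Scl //.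
  rewrite !mxE mulfVK // subrr eqxx.
  by [].
have := subset_leq_card sub; rewrite cardsX cardsT card_in_imset // => H.
have Q1 : (1 <= #|F|)%N by apply/card_gt0P; exists 0.
move: H Hs Q1; move: #|F| #|S0| #|S1| #|S| => a b c d; nia.
Qed.

Lemma card_cond (T : finType) (S : {set T}) (P : pred T) :
  #|[set v in S | P v]| = (\sum_(v in S) nat_of_bool (P v))%N.
Proof.
rewrite -sum1_card.
rewrite [RHS]big_mkcond [LHS]big_mkcond /=; apply: eq_bigr => v _.
by rewrite !inE; case: (v \in S); case: (P v).
Qed.

Lemma plotkin (F : finFieldType) N (C : 'M[F]_N) D :
  [forall v : 'rV[F]_N, ((v <= C)%MS && (v != 0)) ==> (D <= wt v)%N] ->
  exists s, (#|F| ^ \rank C <= s)%N /\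
            (#|F| * ((s - 1) * D) <= N * ((#|F| - 1) * s))%N.
Proof.
move=> /forallP HC.
set S := [set v : 'rV[F]_N | (v <= C)%MS].
exists #|S|; split.
  have sub : (fun x : 'rV[F]_(\rank C) => x *m row_base C) @: setT \subset S.
    apply/subsetP => _ /imsetP [x _ ->]; rewrite inE.
    apply: submx_trans (submxMl _ _) _; by rewrite eq_row_base submx_refl.
  have := subset_leq_card sub; rewrite card_in_imset; last first.
    by move=> x y _ _; apply: (row_free_inj (row_base_free C)).
  by rewrite cardsT card_mx mul1n.
have Scl : forall v w : 'rV[F]_N, v \in S -> w \in S -> forall c : F, v - c *: w \in S.
  move=> v w; rewrite !inE => vS wS c; rewrite inE -scaleNr addmx_sub // scalemx_sub //.
have S0 : (0 : 'rV[F]_N) \in S by rewrite inE sub0mx.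
have E : (\sum_(v in S) wt v = \sum_i #|[set v in S | v 0%R i != 0%R]|)%N.
  under eq_bigr do rewrite wt_sum.
  rewrite exchange_big /=; apply: eq_bigr => i _; by rewrite card_cond.
have Up : (#|F| * \sum_(v in S) wt v <= N * ((#|F| - 1) * #|S|))%N.
  rewrite E big_distrr /=.
  apply: (@leq_trans (\sum_(i < N) (#|F| - 1) * #|S|)%N).
    by apply: leq_sum => i _; apply: coord_count.
  by rewrite sum_nat_const card_ord.
have Lo : ((#|S| - 1) * D <= \sum_(v in S) wt v)%N.
  rewrite (bigD1 0) //= (cardsD1 0 S) S0 add1n subSS subn0.
  apply: leq_trans (leq_addl _ _).
  rewrite -sum1_card big_distrl /= mul1n.
  rewrite [X in (_ <= X)%N](eq_bigl (fun v => v \in S :\ 0)); last first.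
    by move=> v; rewrite !inE andbC.
  apply: leq_sum => v; rewrite !inE => /andP [vn vS].
  by have := HC v; rewrite vS vn.
apply: leq_trans Up; rewrite leq_mul2l Lo orbT //.
Qed.

Lemma arith1 (Q D N P t : nat) : (0 < Q -> 0 < P -> P <= t ->
  N * (Q - 1) * P < Q * D * (P - 1) -> Q * ((t - 1) * D) <= N * ((Q - 1) * t) -> False)%N.
Proof.
case: P => [|P'] // ; case: t => [|t'] //; case: Q => [|Q'] // _ _ HK H Hp.
rewrite !subSS !subn0 in H Hp.
have A1 : (Q'.+1 * D * P' * t'.+1 > N * Q' * P'.+1 * t'.+1)%N.
  by rewrite ltn_pmul2r.
have A2 : (Q'.+1 * (t' * D) * P'.+1 <= N * (Q' * t'.+1) * P'.+1)%N by rewrite leq_mul2r Hp orbT.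
have A3 : (P' * t'.+1 <= t' * P'.+1)%N by nia.
have A4 : (Q'.+1 * D * (P' * t'.+1) <= Q'.+1 * D * (t' * P'.+1))%N by rewrite leq_mul2l A3 orbT.
move: A1 A2 A4; rewrite !mulnA; lia.
Qed.

Lemma kopt_lt (F : finFieldType) N D K :
  (#|F| * D * (#|F| ^ K - 1) > N * (#|F| - 1) * #|F| ^ K)%N ->
  (kopt F N D <= K - 1)%N.
Proof.
move=> H; apply/bigmax_leqP => C HC.
have [s [Hs Hp]] := plotkin HC.
rewrite leqNgt; apply/negP => Hr.
have Q0 : (0 < #|F|)%N by apply/card_gt0P; exists 0.
have HK : (#|F| ^ K <= s)%N.
  apply: leq_trans Hs; apply: leq_pexp2l Q0 _.
  by move: Hr; lia.
have P1 : (1 <= #|F| ^ K)%N by rewrite expn_gt0 Q0.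
exact: (arith1 Q0 P1 HK H Hp).
Qed.


Section Geo.
Variables (F : finFieldType) (k' : nat).
Local Notation k := (k'.+4.+4).

Definition phi (b : bool) (f a c : F) : 'cV[F]_k :=
  if b then a *: (ebasis F k 0 + f *: ebasis F k 1) + c *: (ebasis F k 2 + f *: ebasis F k 3)
  else a *: (ebasis F k 4 + f *: ebasis F k 5) + c *: (ebasis F k 6 + f *: ebasis F k 7).

Lemma eb_comp j i : (i < k)%N -> (ebasis F k j) (inord i) 0 = ((i == j)%:R : F).
Proof. by move=> ik; rewrite mxE inordK. Qed.

Lemma phi_comp b f a c i : (i < 8)%N ->
  phi b f a c (inord i) 0 = nth 0 (if b then [:: a; a*f; c; c*f; 0; 0; 0; 0]
                                  else [:: 0; 0; 0; 0; a; a*f; c; c*f]) i.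
Proof.
move=> i8; have ik : (i < k)%N by apply: leq_trans i8 _.
rewrite /phi; case: b; rewrite !mxE !inordK //; clear ik;
case: i i8 => [|[|[|[|[|[|[|[|i]]]]]]]] i8 //=.
all: by do ![rewrite mulr1n|rewrite mulr0n|rewrite mulr1|rewrite mulr0|rewrite addr0|rewrite add0r|rewrite mul1r|rewrite mul0r].
Qed.

Definition phiq (x : bool * F * F * F) := phi x.1.1.1 x.1.1.2 x.1.2 x.2.

Definition removed (v : 'cV[F]_k) := [exists x, phiq x == v].

Lemma in_U_iff v : in_U v <-> (v != 0) && ~~ removed v.
Proof.
split.
  move=> [nz [h1 h2]]; rewrite nz /=; apply/negP => /existsP [[[[b f] a] c] /eqP E].
  case: b E => E.
    by apply: (h1 f); exists a, c; rewrite -E.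
  by apply: (h2 f); exists a, c; rewrite -E.
move=> /andP [nz nr]; split => //; split => f [a [c E]]; apply: (negP nr);
  apply/existsP.
  by exists (true, f, a, c); rewrite /phiq /= E.
by exists (false, f, a, c); rewrite /phiq /= E.
Qed.

Lemma phi_scale l b f a c : l *: phi b f a c = phi b f (l * a) (l * c).
Proof. by case: b; rewrite /phi scalerDr !scalerA. Qed.

Lemma phi_lin b f a c : phi b f a c = a *: phi b f 1 0 + c *: phi b f 0 1.
Proof. by case: b; rewrite /phi !scale1r !scale0r addr0 add0r. Qed.


Lemma phi_inj b f a c b' f' a' c' : phi b f a c = phi b' f' a' c' ->
  (a != 0) || (c != 0) -> (b, f, a, c) = (b', f', a', c').
Proof.
move=> E nz.
have C i : (i < 8)%N -> phi b f a c (inord i) 0 = phi b' f' a' c' (inord i) 0 by rewrite E.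
have := C 0%N isT; have := C 1%N isT; have := C 2%N isT; have := C 3%N isT.
have := C 4%N isT; have := C 5%N isT; have := C 6%N isT; have := C 7%N isT.
rewrite !phi_comp //; clear C E.
case: b; case: b' => /= e7 e6 e5 e4 e3 e2 e1 e0.
- subst; case/orP: nz => nz.
    by rewrite (mulfI nz e1).
  by rewrite (mulfI nz e3).
- by move: nz; rewrite e0 e2 eqxx.
- by move: nz; rewrite e4 e6 eqxx.
- subst; case/orP: nz => nz.
    by rewrite (mulfI nz e5).
  by rewrite (mulfI nz e7).
Qed.

Lemma phi0 b f a c : phi b f a c = 0 -> a = 0 /\ c = 0.
Proof.
move=> E.
have C i : (i < 8)%N -> phi b f a c (inord i) 0 = 0 by rewrite E mxE.
have := C 0%N isT; have := C 2%N isT; have := C 4%N isT; have := C 6%N isT.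
by rewrite !phi_comp //; clear C E; case: b => /=.
Qed.

Lemma card_all : #|{: 'cV[F]_k}| = (#|F| ^ k)%N.
Proof. by rewrite card_mx muln1. Qed.

Lemma card_removed :
  (2 * #|F| * (#|F| * #|F| - 1) + 1 + #|[set v : 'cV[F]_k | (v != 0%R) && ~~ removed v]| <= #|F| ^ k)%N.
Proof.
set D' := [set x : bool * F * F * F | (x.1.2 != 0) || (x.2 != 0)].
set R := phiq @: D'.
have cR : #|R| = #|D'|.
  apply: card_in_imset => [[[[b f] a] c]] [[[b' f'] a'] c']; rewrite inE /= => nz _ E.
  exact: phi_inj E nz.
have cD : (#|D'| + 2 * #|F|= 2 * (#|F| * (#|F| * #|F|)))%N.
  have Z : ~: D' = (fun y : bool * F => (y.1, y.2, 0, 0)) @: setT.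
    apply/setP => [[[[b f] a] c]]; rewrite !inE /= negb_or !negbK.
    apply/idP/imsetP.
      by move=> /andP [/eqP -> /eqP ->]; exists (b, f).
    by move=> [[b' f'] _ [_ _ -> ->]]; rewrite eqxx.
  have := cardsC D'; rewrite Z card_imset; last by move=> [b1 f1] [b2 f2] /= [-> ->].
  by rewrite cardsT !card_prod card_bool !mulnA.
have sub : [set v : 'cV[F]_k | (v != 0) && ~~ removed v] \subset ~: (0 |: R).
  apply/subsetP => v; rewrite !inE => /andP [nz nr]; rewrite negb_or nz /=.
  apply/imsetP => [[x _ E]]; apply: (negP nr); apply/existsP; exists x; by rewrite E.
have := subset_leq_card sub.
have := cardsC (0 |: R); rewrite cardsU1 card_all.
have -> : (0 : 'cV[F]_k) \notin R.
  apply/imsetP => [[[[[b f] a] c] xD E]].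
  rewrite /phiq /= in E; move: xD; rewrite inE /=; have [-> ->] := phi0 (esym E); by rewrite eqxx.
move: cR cD; move: #|D'| #|R| #|~: (0 |: R)| #|[set v : 'cV[F]_k | (v != 0%R) && ~~ removed v]|.
move=> a b c d; have Q1 : (1 <= #|F|)%N by apply/card_gt0P; exists 0.
move: Q1 (#|F|) (#|F| ^ k)%N => Q1 Q P; nia.
Qed.

Lemma lin_m (m : 'rV[F]_k) b f a c :
  (m *m phi b f a c) 0 0 = a * (m *m phi b f 1 0) 0 0 + c * (m *m phi b f 0 1) 0 0.
Proof. by rewrite {1}phi_lin mulmxDr -!scalemxAr !mxE. Qed.

Lemma card_removed_m (m : 'rV[F]_k) :
  (#|[set v : 'cV[F]_k | removed v && ((m *m v) 0%R 0%R != 0%R)]| + 2 * #|F| * #|F|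
     <= 2 * (#|F| * (#|F| * #|F|)))%N.
Proof.
set D1 := [set x | (m *m phiq x) 0 0 != 0].
have s1 : [set v : 'cV[F]_k | removed v && ((m *m v) 0%R 0%R != 0%R)] \subset phiq @: D1.
  apply/subsetP => v; rewrite inE => /andP [/existsP [x /eqP E] nz].
  by apply/imsetP; exists x; rewrite // inE E.
have := subset_leq_card s1; have := leq_imset_card phiq D1.
pose al b f := (m *m phi b f 1 0) 0 0; pose be b f := (m *m phi b f 0 1) 0 0.
pose g (y : bool * F * F) : bool * F * F * F :=
  if be y.1.1 y.1.2 == 0 then (y.1.1, y.1.2, 0, y.2)
  else (y.1.1, y.1.2, y.2, - (y.2 * al y.1.1 y.1.2) / be y.1.1 y.1.2).
have s0 : g @: setT \subset ~: D1.
  apply/subsetP => _ /imsetP [[[b f] y] _ ->]; rewrite !inE negbK /g /phiq /=.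
  case: ifP => /eqP bz /=; rewrite lin_m -/(al b f) -/(be b f).
    by rewrite bz mul0r mulr0 addr0.
  have L : forall x z : F, z != 0 -> x + (- x / z) * z = 0 by move=> x z zn; rewrite divfK // subrr.
  by apply/eqP; apply: L; apply/eqP.
have := subset_leq_card s0; rewrite card_in_imset; last first.
  move=> [[b f] y] [[b' f'] y'] _ _; rewrite /g /=.
  move=> E.
  have Eb : b = b' by move: E; case: ifP => _; case: ifP => _ [].
  have Ef : f = f' by move: E; case: ifP => _; case: ifP => _ [].
  subst b' f'; congr (_, _, _); move: E; case: ifP => _ /= E.
    by case: E.
  by case: E.
have := cardsC D1; rewrite cardsT !card_prod card_bool.
move: #|D1| #|~: D1| #|phiq @: D1| #|[set v : 'cV[F]_k | removed v && ((m *m v) 0%R 0%R != 0%R)]|.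
move=> a b c d; move: (#|F|) => Q; nia.
Qed.

Lemma addE00 (A B : 'M[F]_1) : (A + B) 0 0 = A 0 0 + B 0 0.
Proof. by rewrite mxE. Qed.
Lemma scaleE00 c (A : 'M[F]_1) : (c *: A) 0 0 = c * A 0 0.
Proof. by rewrite mxE. Qed.

Lemma card_ker (m : 'rV[F]_k) : m != 0 ->
  (#|F| * #|[set v : 'cV[F]_k | (m *m v) 0%R 0%R == 0%R]| <= #|F| ^ k)%N.
Proof.
move=> nm.
case: (pickP (fun i => m 0 i != 0)) => [i mi | H]; last first.
  case/eqP: nm; apply/matrixP => a b; rewrite ord1 mxE.
  by move/negbFE: (H b) => /eqP.
set u := (m 0 i)^-1 *: (delta_mx i 0 : 'cV[F]_k).
have mu : (m *m u) 0 0 = 1.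
  by rewrite -scalemxAr -colE !mxE mulVf.
have Hm : forall c v, (m *m v) 0 0 == 0 -> (m *m (v + c *: u)) 0 0 = c.
  move=> c v /eqP mv; rewrite mulmxDr -scalemxAr addE00 scaleE00 mv add0r.
  by rewrite mu mulr1.
set Z := [set v : 'cV[F]_k | (m *m v) 0%R 0%R == 0%R].
have := max_card ((fun x : F * 'cV[F]_k => x.2 + x.1 *: u) @: setX setT Z).
rewrite card_in_imset ?cardsX ?cardsT ?card_all //.
move=> [c v] [c' v']; rewrite !inE /= => vZ vZ' E.
have Ec : c = c' by rewrite -(Hm c v vZ) -(Hm c' v' vZ') E.
by move: E; rewrite Ec => /addIr ->.
Qed.

Variables (n : nat) (G : 'M[F]_(k, n)).
Hypothesis HG : C2_generator G.

Lemma removed_scale c v : c != 0 -> removed (c *: v) -> removed v.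
Proof.
move=> cn /existsP [[[[b f] a] c'] /eqP E]; apply/existsP.
exists (b, f, c^-1 * a, c^-1 * c'); apply/eqP.
by rewrite /phiq /= -phi_scale; rewrite /phiq /= in E; rewrite E scalerA mulVf // scale1r.
Qed.

Lemma colU j : (col j G != 0) && ~~ removed (col j G).
Proof. by apply/in_U_iff; case: HG => H _; apply: H. Qed.

Lemma card_n : ((#|F| - 1) * n <= #|[set v : 'cV[F]_k | (v != 0%R) && ~~ removed v]|)%N.
Proof.
set f := fun jc : 'I_n * F => jc.2 *: col jc.1 G.
have sub : f @: setX setT [set~ 0] \subset [set v : 'cV[F]_k | (v != 0%R) && ~~ removed v].
  apply/subsetP => x /imsetP [[j c] /setXP [_]]; rewrite !inE => cn ->; rewrite /f /=.
  have /andP [nz nr] := colU j.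
  rewrite scaler_eq0 negb_or cn nz /=; apply/negP => /removed_scale.
  by move=> /(_ cn); apply/negP.
have := subset_leq_card sub; rewrite card_in_imset.
  by rewrite cardsX cardsT cardsC1 card_ord mulnC -subn1.
move=> [j c] [j' c']; rewrite !inE /= => cn cn' E.
rewrite /f /= in E.
have Ej : j = j'.
  case: HG => _ [H _]; apply: (H j j' (c^-1 * c')).
  by rewrite -scalerA -E scalerA mulVf // scale1r.
subst j'; congr (_, _).
have /andP [nz _] := colU j.
apply/eqP; rewrite -subr_eq0; apply/eqP.
by move: E => /eqP; rewrite -subr_eq0 -scalerBl scaler_eq0 (negbTE nz) orbF => /eqP.
Qed.

Lemma mG_col (m : 'rV[F]_k) j : (m *m col j G) 0 0 = (m *m G) 0 j.
Proof. by rewrite colE mulmxA -colE mxE. Qed.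

Lemma wt_lower (m : 'rV[F]_k) :
  (#|[set v : 'cV[F]_k | ((v != 0%R) && ~~ removed v) && ((m *m v) 0%R 0%R != 0%R)]|
     <= (#|F| - 1) * wt (m *m G))%N.
Proof.
set f := fun jc : 'I_n * F => jc.2 *: col jc.1 G.
have sub : [set v : 'cV[F]_k | ((v != 0%R) && ~~ removed v) && ((m *m v) 0%R 0%R != 0%R)]
    \subset f @: setX [set j | (m *m G) 0 j != 0] [set~ 0].
  apply/subsetP => v; rewrite inE => /andP [vU mv].
  have [_ [_ H]] := HG; have [j [c E]] := H v (proj2 (in_U_iff v) vU).
  apply/imsetP; exists (j, c) => //.
  move: mv; rewrite E -scalemxAr scaleE00 mulf_eq0 negb_or mG_col => /andP [cn jn].
  by rewrite !inE jn cn.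
apply: leq_trans (subset_leq_card sub) _.
apply: leq_trans (leq_imset_card _ _) _.
by rewrite cardsX cardsC1 mulnC -subn1.
Qed.

Lemma wt_bound (m : 'rV[F]_k) : m *m G != 0 ->
  (#|F| * #|F| ^ k'.+3.+4 + 2 * #|F| * #|F|
     <= (#|F| - 1) * wt (m *m G) + 2 * (#|F| * (#|F| * #|F|)) + #|F| ^ k'.+3.+4)%N.
Proof.
move=> nz.
have mn : m != 0 by apply: contraNneq nz => ->; rewrite mul0mx.
have HZ := card_ker mn.
have HB := card_removed_m m.
have HA := wt_lower m.
set Z := [set v : 'cV[F]_k | (m *m v) 0%R 0%R == 0%R].
set Nn := [set v : 'cV[F]_k | (m *m v) 0%R 0%R != 0%R].
have cZN : (#|Z| + #|Nn| = #|F| ^ k)%N.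
  rewrite -card_all -(cardsC Z); congr addn; apply: eq_card => v; by rewrite !inE.
have sN : Nn \subset [set v : 'cV[F]_k | ((v != 0%R) && ~~ removed v) && ((m *m v) 0%R 0%R != 0%R)]
           :|: [set v : 'cV[F]_k | removed v && ((m *m v) 0%R 0%R != 0%R)].
  apply/subsetP => v; rewrite !inE => mv; rewrite mv !andbT.
  have -> : v != 0 by apply: contraNneq mv => ->; rewrite mulmx0 mxE.
  by case: (removed v).
have := subset_leq_card sN; have := cardsU [set v : 'cV[F]_k | ((v != 0%R) && ~~ removed v) && ((m *m v) 0%R 0%R != 0%R)]
  [set v : 'cV[F]_k | removed v && ((m *m v) 0%R 0%R != 0%R)].
move=> E1 E2.
rewrite -/Z in HZ; rewrite expnS in HZ cZN.
move: HZ HB HA cZN E1 E2.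
move: (#|F| ^ k'.+3.+4)%N #|Z| #|Nn| (wt (m *m G)) => X z nn w.
move: #|[set v : 'cV[F]_k | ((v != 0%R) && ~~ removed v) && ((m *m v) 0%R 0%R != 0%R)]| => a.
move: #|[set v : 'cV[F]_k | removed v && ((m *m v) 0%R 0%R != 0%R)]| => b.
move: #|[set v : 'cV[F]_k | ((v != 0%R) && ~~ removed v) && ((m *m v) 0%R 0%R != 0%R)] :&: [set v : 'cV[F]_k | removed v && ((m *m v) 0%R 0%R != 0%R)]| => c.
move: #|[set v : 'cV[F]_k | ((v != 0%R) && ~~ removed v) && ((m *m v) 0%R 0%R != 0%R)] :|: [set v : 'cV[F]_k | removed v && ((m *m v) 0%R 0%R != 0%R)]| => d.
have Q1 : (1 <= #|F|)%N by apply/card_gt0P; exists 0.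
move: Q1; move: (#|F|) => Q; nia.
Qed.


Lemma colsp v : in_U v -> (v^T <= G^T)%MS.
Proof.
move=> vU; have [_ [_ H]] := HG; have [j [c ->]] := H v vU.
by rewrite linearZ /= tr_col scalemx_sub // row_sub.
Qed.

Lemma notU_a (v : 'cV[F]_k) : v (inord 0) 0 = 1 -> v (inord 1) 0 = 1 ->
  v (inord 2) 0 = 1 -> v (inord 3) 0 = 0 -> in_U v.
Proof.
move=> e0 e1 e2 e3; split; [|split] => [|f [a [c E]]|f [a [c E]]].
- by apply/eqP => v0; move: e0; rewrite v0 mxE => /eqP; rewrite eq_sym oner_eq0.
- change (v = phi true f a c) in E.
  move: e0 e1 e2 e3; rewrite E !phi_comp //= => ->; rewrite mul1r => -> -> /eqP.
  by rewrite mulr1 oner_eq0.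
- change (v = phi false f a c) in E.
  move: e0; rewrite E phi_comp //= => /eqP; by rewrite eq_sym oner_eq0.
Qed.

Lemma notU_b (v : 'cV[F]_k) : v (inord 4) 0 = 1 -> v (inord 5) 0 = 1 ->
  v (inord 6) 0 = 1 -> v (inord 7) 0 = 0 -> in_U v.
Proof.
move=> e0 e1 e2 e3; split; [|split] => [|f [a [c E]]|f [a [c E]]].
- by apply/eqP => v0; move: e0; rewrite v0 mxE => /eqP; rewrite eq_sym oner_eq0.
- change (v = phi true f a c) in E.
  move: e0; rewrite E phi_comp //= => /eqP; by rewrite eq_sym oner_eq0.
- change (v = phi false f a c) in E.
  move: e0 e1 e2 e3; rewrite E !phi_comp //= => ->; rewrite mul1r => -> -> /eqP.
  by rewrite mulr1 oner_eq0.
Qed.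

Lemma sub_lin (A B : 'rV[F]_k) : (A <= G^T)%MS -> (B <= G^T)%MS -> (A - B <= G^T)%MS.
Proof. by move=> hA hB; rewrite -scaleN1r addmx_sub // scalemx_sub. Qed.

Lemma eb_sub (j : 'I_k) : ((ebasis F k j)^T <= G^T)%MS.
Proof.
have ej i : (i < k)%N -> ebasis F k j (inord i) 0 = ((i == j)%:R : F) by move=> ik; rewrite mxE inordK.
case: (ltnP j 4) => hj.
  set x := ebasis F k 4 + ebasis F k 5 + ebasis F k 6.
  have xU : in_U x by apply: notU_b; rewrite !mxE !inordK //=;
    by do ![rewrite mulr1n|rewrite mulr0n|rewrite addr0|rewrite add0r].
  have yU : in_U (ebasis F k j + x).
    apply: notU_b; rewrite !mxE !inordK //= ?(gtn_eqF (leq_trans hj _)) //=;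
    by do ![rewrite mulr1n|rewrite mulr0n|rewrite addr0|rewrite add0r].
  have := sub_lin (colsp yU) (colsp xU); by rewrite -linearB /= addrK.
set x := ebasis F k 0 + ebasis F k 1 + ebasis F k 2.
have xU : in_U x by apply: notU_a; rewrite !mxE !inordK //=;
  by do ![rewrite mulr1n|rewrite mulr0n|rewrite addr0|rewrite add0r].
have yU : in_U (ebasis F k j + x).
  apply: notU_a; rewrite !mxE !inordK //= ?(ltn_eqF (leq_trans _ hj)) //=;
  by do ![rewrite mulr1n|rewrite mulr0n|rewrite addr0|rewrite add0r].
have := sub_lin (colsp yU) (colsp xU); by rewrite -linearB /= addrK.
Qed.

Lemma rankG : \rank G = k.
Proof.
apply/eqP; rewrite eqn_leq rank_leq_row -mxrank_tr.
apply: (@leq_trans (\rank (1%:M : 'M[F]_k))); first by rewrite mxrank1.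
apply: mxrankS; apply/row_subP => i.
have -> : row i (1%:M : 'M[F]_k) = (ebasis F k i)^T.
  by apply/matrixP => a b; rewrite !mxE eq_sym.
exact: eb_sub.
Qed.

End Geo.


Lemma bigmin_seq_le (x : nat) (F : nat -> nat) (r : seq nat) t :
  t \in r -> (\big[minn/x]_(i <- r) F i <= F t)%N.
Proof.
elim: r => // a r IH; rewrite in_cons big_cons => /orP [/eqP ->|tr].
  exact: geq_minl.
exact: leq_trans (geq_minr _ _) (IH tr).
Qed.

Lemma cm_bound_le (F : finFieldType) n d r t : (1 <= t)%N -> (t * r.+1 <= n)%N ->
  (cm_bound F n d r <= t * r + kopt F (n - t * r.+1) d)%N.
Proof.
move=> t1 tn; apply: (bigmin_seq_le _ (cm_term F n d r)).
rewrite mem_index_iota t1 /= ltnS leq_divRL //.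
Qed.

Lemma arith3 (Q X n D : nat) : (3 <= Q)%N -> (2 * Q * Q * Q <= X)%N ->
  ((Q - 1) * n + 2 * Q * (Q * Q - 1) + 1 <= Q * X)%N ->
  (Q * X + 2 * Q * Q <= (Q - 1) * D + 2 * (Q * (Q * Q)) + X)%N ->
  ((n - 3) * (Q - 1) * (Q * X) < Q * D * (Q * X - 1))%N.
Proof.
move=> Q3 XQ F1 F2.
have HD : (X <= D + 2 * Q * Q)%N.
  have : ((Q - 1) * X <= (Q - 1) * (D + 2 * Q * Q))%N by nia.
  by rewrite leq_mul2l; case/orP => // /eqP; lia.
nia.
Qed.

Lemma arith2 (X n D : nat) : (2 ^ 7 <= X)%N ->
  ((2 - 1) * n + 2 * 2 * (2 * 2 - 1) + 1 <= 2 * X)%N ->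
  (2 * X + 2 * 2 * 2 <= (2 - 1) * D + 2 * (2 * (2 * 2)) + X)%N ->
  ((n - 2 * 3) * (2 - 1) * X < 2 * D * (X - 1))%N.
Proof. move=> X7 F1 F2; nia. Qed.

Unset Implicit Arguments.
Set Strict Implicit.

Theorem theorem4p2 (F : finFieldType) (k n : nat) (G : 'M[F]_(k, n)) :
  (8 <= k)%N ->
  C2_generator G ->
  (#|F| = 2%N -> (cm_defect F n (\rank G) (code_mindist G) 2 <= 2)%N) /\
  ((3 <= #|F|)%N -> (cm_defect F n (\rank G) (code_mindist G) 2 <= 1)%N).
Proof.
move=> k8 HG.
have [k' Ek] : exists k', k = k'.+4.+4 by exists (k - 8)%N; lia.
subst k.
rewrite (rankG HG).
have Q2 : (2 <= #|F|)%N.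
  by rewrite (cardD1 (0:F)) (cardD1 (1:F)) !inE oner_neq0.
set X := (#|F| ^ k'.+3.+4)%N.
have QX : (#|F| ^ k'.+4.+4 = #|F| * X)%N by rewrite expnS.
have X7 : (#|F| ^ 7 <= X)%N by rewrite /X leq_pexp2l //; lia.
have F1 : ((#|F| - 1) * n + 2 * #|F| * (#|F| * #|F| - 1) + 1 <= #|F| * X)%N.
  have := card_n HG; have := card_removed F k'; rewrite QX; lia.
have [m0 m0G] : exists m0 : 'rV[F]_(k'.+4.+4), m0 *m G != 0.
  case: (pickP (fun ij : 'I_(k'.+4.+4) * 'I_n => G ij.1 ij.2 != 0)) => [[i j] /= Gij | H].
    exists (delta_mx 0 i); rewrite -rowE; apply/eqP => /matrixP /(_ 0 j).
    by rewrite !mxE => /eqP; rewrite (negbTE Gij).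
  have : \rank G = 0%N.
    have -> : G = 0 by apply/matrixP => i j; rewrite mxE; move/negbFE: (H (i, j)) => /eqP.
    exact: mxrank0.
  by rewrite (rankG HG).
set D := code_mindist G.
pose P (x : nat) := (#|F| * X + 2 * #|F| * #|F| <= (#|F| - 1) * x + 2 * (#|F| * (#|F| * #|F|)) + X)%N.
have Pmono x y : (x <= y)%N -> P x -> P y.
  rewrite /P => xy; move=> H; apply: leq_trans H _.
  by rewrite leq_add2r leq_add2r leq_mul2l xy orbT.
have Pm0 : P (wt (m0 *m G)) by apply: wt_bound.
have wtn : (wt (m0 *m G) <= n)%N by rewrite /wt; apply: leq_trans (max_card _) _; rewrite card_ord.
have PD : P D.
  rewrite /D /code_mindist; apply: (big_ind P).
  - exact: Pmono wtn Pm0.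
  - by move=> x y Px Py; rewrite /minn; case: ifP.
  - by move=> m mG; apply: wt_bound.
have nX : (X <= n + 2 * #|F| * #|F|)%N.
  have : ((#|F| - 1) * X <= (#|F| - 1) * (n + 2 * #|F| * #|F|))%N.
    have := Pmono _ _ wtn Pm0; rewrite /P; nia.
  by rewrite leq_mul2l; case/orP => // /eqP; lia.
have Qp7 : (#|F| ^ 7 = #|F| * (#|F| * (#|F| * (#|F| * (#|F| * (#|F| * #|F|))))))%N.
  by rewrite !expnS expn0 muln1.
split.
- move=> Q2e.
  have Hb := @cm_bound_le F n D 2 2 isT.
  have Hk : (kopt F (n - 2 * 3) D <= k'.+3.+4 - 1)%N.
    apply: kopt_lt; rewrite -/X Q2e.
    apply: arith2; first by move: X7; rewrite Q2e.
    + by move: F1; rewrite Q2e.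
    + by move: PD; rewrite /P Q2e.
  have n6 : (2 * 3 <= n)%N by move: nX X7; rewrite Qp7 Q2e; lia.
  have := Hb n6; rewrite /cm_defect; lia.
- move=> Q3.
  have Hb := @cm_bound_le F n D 2 1 isT.
  have Hk : (kopt F (n - 1 * 3) D <= k'.+4.+4 - 1)%N.
    apply: kopt_lt; rewrite QX mul1n.
    apply: arith3 => //.
    move: X7; rewrite Qp7; nia.
  have n3 : (1 * 3 <= n)%N by move: nX X7; rewrite Qp7; nia.
  have := Hb n3; rewrite /cm_defect; lia.
Qed.
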